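(* Let $G=\langle A\cup B\rangle$ be a CS group with periodic rooted group $A$ such that either (i) $A$ has finite exponent, or (ii) the directed group $B$ has finite support. Let $S$ be a generating set of $B$. If the atomic dynamical system $\Sigma_S$ on $\mathcal P(A)$ is eventually trivial, then $G$ is periodic.
   Context: Let $X$ be a nonempty set (possibly infinite) with distinguished letter $0$, $\dot X=X\setminus\{0\}$. $X^*$ is the free monoid on $X$ viewed as a rooted tree; $\mathrm{Aut}(X^* )$ is the group of root-fixing tree automorphisms acting on the right ($gh$ = first $g$ then $h$); sections $g|_u$ are defined by $(u\star v).g=u.g\star v.(g|_u)$; elements of $\mathrm{Sym}(X)$ are identified with rooted automorphisms $(x\star v).\rho=x.\rho\star v$; $\mathrm{St}(1)$ is the first layer stabiliser. A constant spinal (CS) group is $G=\langle A\cup B\rangle$ with $A\le\mathrm{Sym}(X)$ transitive (rooted group) and $B\le\mathrm{St}(1)$ (directed group) such that $b|_0=b$ for all $b\in B$ and the elements $b|_x$ ($b\in B$, $x\in\dot X$) lie in $A$ and generate $A$. $B$ has finite support if each $b\in B$ has $b|_x=\mathrm{id}$ for all but finitely many $x$. A group is periodic if every element has finite order. Notation: $\mathrm{orb}_c(0)$ is the $\langle c\rangle$-orbit of $0$ and $\ell_c(0)$ its length. For $x\in X$ let $\mathrm{mp}_A(0,x)=\{c\in A:0.c=x\}$. For $a\in A$, $x\in X$: $\mathfrak C(a,x)=\{cac^{-1}:c\in\mathrm{mp}_A(0,x)\}$ and $\mathfrak X(a,x)=\bigcup_{c\in\mathfrak C(a,x)}\mathrm{orb}_c(0)\setminus\{0\}$.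 For $S\subseteq B$ put $H_S(a,x)=\langle b|_y: y\in\mathfrak X(a,x),\ b\in S\rangle\le A$ and define $\sigma_S(a,x)=\big\langle\, b|_{0.c}\,b|_{0.c^2}\cdots b|_{0.c^{\ell_c(0)-1}} : c\in\mathfrak C(a,x),\ b\in S\,\big\rangle\cdot H_S(a,x)'\subseteq A$, where $H_S(a,x)'$ is the derived subgroup (the set does not depend on the order of the factors in the products). $\Sigma_S:\mathcal P(A)\to\mathcal P(A)$ is the atomic map $\Sigma_S(P)=\bigcup_{a\in P}\bigcup_{x\in X}\sigma_S(a,x)$. It is eventually trivial if for every $a\in A$ there is $n$ with $\Sigma_S^m(\{a\})\subseteq\{1_A\}$ for all $m>n$. *)

(* Defs.v *)
(* Words are lists (first letter = letter nearest the root).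
   Tree automorphisms are modelled as functions  list X -> list X ;
   w.g := g w  (right action), so the product gh ("first g then h")
   is the function  fun w => h (g w). *)
From Stdlib Require Import List Arith.
Import ListNotations.
Set Implicit Arguments.

Section CS.
Variable X : Type.
Variable x0 : X.

Inductive gen_group (T : Type) (S : (T -> T) -> Prop) : (T -> T) -> Prop :=
| gg_id : gen_group S (fun t => t)
| gg_gen s : S s -> gen_group S s
| gg_mul g h : gen_group S g -> gen_group S h -> gen_group S (fun t => h (g t))
| gg_inv g h : gen_group S g -> (forall t, h (g t) = t) ->
               (forall t, g (h t) = t) -> gen_group S h.

Definition is_subgroup (T : Type) (H : (T -> T) -> Prop) : Prop :=
  H (fun t => t) /\
  (forall g h, H g -> H h -> H (fun t => h (g t))) /\
  (forall g, H g -> exists h, H h /\ (forall t, h (g t) = t) /\ (forall t, g (h t) = t)).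

Definition is_bijection (T : Type) (f : T -> T) : Prop :=
  exists h : T -> T, (forall t, h (f t) = t) /\ (forall t, f (h t) = t).

Definition is_tree_aut (g : list X -> list X) : Prop :=
  is_bijection g /\ g [] = [] /\
  (forall w x, exists y, g (w ++ [x]) = g w ++ [y]).

(* section g|_u :  (u v).g = (u.g)(v.(g|_u)) *)
Definition section (g : list X -> list X) (u : list X) : list X -> list X :=
  fun v => skipn (length u) (g (u ++ v)).

Definition rooted (rho : X -> X) : list X -> list X :=
  fun w => match w with [] => [] | x :: v => rho x :: v end.

(* the permutation of X induced on the first level below x by g (i.e. the
   label of g|_x when g|_x is rooted) *)
Definition secA (g : list X -> list X) (x : X) : X -> X :=
  fun y => match g [x; y] with _ :: z :: _ => z | _ => y end.

Definition in_St1 (g : list X -> list X) : Prop := forall x, g [x] = [x].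

Definition is_CS (A : (X -> X) -> Prop) (B : (list X -> list X) -> Prop) : Prop :=
  (forall a, A a -> is_bijection a) /\ is_subgroup A /\
  (forall x y, exists a, A a /\ a x = y) /\
  (forall b, B b -> is_tree_aut b /\ in_St1 b) /\ is_subgroup B /\
  (forall b, B b -> forall v, section b [x0] v = b v) /\
  (forall b x, B b -> x <> x0 ->
      A (secA b x) /\ forall v, section b [x] v = rooted (secA b x) v) /\
  (forall a, A a <-> gen_group (fun f => exists b x, B b /\ x <> x0 /\ f = secA b x) a).

Definition CS_group (A : (X -> X) -> Prop) (B : (list X -> list X) -> Prop)
  : (list X -> list X) -> Prop :=
  gen_group (fun g => (exists a, A a /\ g = rooted a) \/ B g).

Definition periodic (T : Type) (G : (T -> T) -> Prop) : Prop :=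
  forall g, G g -> exists n, 0 < n /\ forall t, Nat.iter n g t = t.

Definition finite_exponent (A : (X -> X) -> Prop) : Prop :=
  exists n, 0 < n /\ forall a, A a -> forall t, Nat.iter n a t = t.

Definition finite_support (B : (list X -> list X) -> Prop) : Prop :=
  forall b, B b -> exists F : list X,
    forall x, ~ In x F -> forall v, section b [x] v = v.

Definition generates (S B : (list X -> list X) -> Prop) : Prop :=
  (forall b, S b -> B b) /\ (forall g, B g <-> gen_group S g).

(* product f_1 f_2 ... f_n  (first f_1, then f_2, ...) *)
Definition prod_list (fs : list (X -> X)) : X -> X :=
  fold_left (fun acc f => fun y => f (acc y)) fs (fun y => y).

Section Sigma.
Variable A : (X -> X) -> Prop.
Variable S : (list X -> list X) -> Prop.

(* C(a,x) = { c a c^{-1} : c in A, 0.c = x } *)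
Definition Cset (a : X -> X) (x : X) (d : X -> X) : Prop :=
  exists c ci, A c /\ c x0 = x /\ A ci /\
    (forall y, ci (c y) = y) /\ (forall y, c (ci y) = y) /\
    (forall y, d y = ci (a (c y))).

Definition Xset (a : X -> X) (x : X) (y : X) : Prop :=
  exists c k, Cset a x c /\ Nat.iter k c x0 = y /\ y <> x0.

Definition Hgroup (a : X -> X) (x : X) : (X -> X) -> Prop :=
  gen_group (fun f => exists b y, S b /\ Xset a x y /\ f = secA b y).

Definition derived (H : (X -> X) -> Prop) : (X -> X) -> Prop :=
  gen_group (fun f => exists g h gi hi, H g /\ H h /\
     (forall y, gi (g y) = y) /\ (forall y, g (gi y) = y) /\
     (forall y, hi (h y) = y) /\ (forall y, h (hi y) = y) /\
     (* [g,h] = g^{-1} h^{-1} g h *)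
     f = fun y => h (g (hi (gi y)))).

Definition sigma_gens (a : X -> X) (x : X) (f : X -> X) : Prop :=
  exists c b l, Cset a x c /\ S b /\
    0 < l /\ Nat.iter l c x0 = x0 /\
    (forall k, 0 < k < l -> Nat.iter k c x0 <> x0) /\
    f = prod_list (map (fun k => secA b (Nat.iter k c x0)) (seq 1 (l - 1))).

Definition sigma (a : X -> X) (x : X) (z : X -> X) : Prop :=
  exists p q, gen_group (sigma_gens a x) p /\ derived (Hgroup a x) q /\
    forall y, z y = q (p y).

Definition Sigma (P : (X -> X) -> Prop) : (X -> X) -> Prop :=
  fun z => exists a x, P a /\ sigma a x z.

Definition eventually_trivial : Prop :=
  forall a, A a -> exists n, forall m, n < m ->
    forall z, Nat.iter m Sigma (fun f => f = a) z -> forall y, z y = y.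

End Sigma.
End CS.

(* Main.v *)
Require Import Defs.
From Stdlib Require Import List Arith Lia PeanoNat Permutation FunctionalExtensionality Classical ClassicalEpsilon.
Import ListNotations.
Set Implicit Arguments.


Lemma flat_map_nil' {T U : Type} (L : list T) : flat_map (fun _ => @nil U) L = [].
Proof. induction L; simpl; auto. Qed.

Lemma perm_exchange {I J U : Type} (F : I -> J -> U) (Li : list I) (Lj : list J) :
  Permutation (flat_map (fun j => map (fun i => F i j) Li) Lj)
              (flat_map (fun i => map (fun j => F i j) Lj) Li).
Proof. revert Li. induction Lj as [|j Lj IH]; intros Li; simpl.
  - rewrite flat_map_nil'. auto.
  - eapply perm_trans. apply Permutation_app_head. apply IH.
    clear IH. induction Li as [|i Li IH]; simpl; auto.
    apply perm_skip. eapply perm_trans. apply Permutation_app_swap_app.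
    apply Permutation_app_head. exact IH. Qed.

Lemma list_sum_flat_map {T : Type} (f : T -> list nat) L :
  list_sum (flat_map f L) = list_sum (map (fun y => list_sum (f y)) L).
Proof. induction L; simpl; auto. rewrite list_sum_app, IHL. auto. Qed.

Lemma sum_exchange {I J : Type} (F : I -> J -> nat) (Li : list I) (Lj : list J) :
  list_sum (map (fun j => list_sum (map (fun i => F i j) Li)) Lj) =
  list_sum (map (fun i => list_sum (map (fun j => F i j) Lj)) Li).
Proof. rewrite <- !list_sum_flat_map. apply Permutation_list_sum. apply perm_exchange. Qed.

Lemma sum_le_length {T : Type} (f : T -> nat) L : (forall y, In y L -> f y <= 1) ->
  list_sum (map f L) <= length L.
Proof. induction L; simpl; intros H; auto. pose proof (H a (or_introl eq_refl)).
  pose proof (IHL (fun y Hy => H y (or_intror Hy))). lia. Qed.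

Lemma sum_eq_length {T : Type} (f : T -> nat) L : (forall y, In y L -> f y <= 1) ->
  list_sum (map f L) = length L -> forall y, In y L -> f y = 1.
Proof. induction L; simpl; intros H E y Hy. contradiction.
  pose proof (H a (or_introl eq_refl)).
  pose proof (sum_le_length f L (fun y Hy => H y (or_intror Hy))).
  destruct Hy as [<-|Hy]. lia. apply IHL; auto. lia. Qed.

Lemma sum_pos_ex {T : Type} (f : T -> nat) L : 0 < list_sum (map f L) -> exists y, In y L /\ 0 < f y.
Proof. induction L; simpl; intros H. lia. destruct (f a) eqn:E.
  - destruct IHL as (y&Hy&Hf). lia. exists y; auto.
  - exists a. split; auto. lia. Qed.

Lemma sum_zero {T : Type} (f : T -> nat) L : (forall y, In y L -> f y = 0) -> list_sum (map f L) = 0.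
Proof. induction L; simpl; intros H; auto. rewrite H, IHL; auto. Qed.

Lemma sum_atmost1 (f : nat -> nat) l : (forall j, f j <= 1) ->
  (forall j1 j2, j1 < j2 < l -> f j1 = 1 -> f j2 = 1 -> False) ->
  list_sum (map f (seq 0 l)) <= 1.
Proof. intros H1 H2. induction l. simpl; lia.
  rewrite seq_S, map_app, list_sum_app. simpl.
  pose proof (H1 l). destruct (f l) eqn:E.
  - assert (list_sum (map f (seq 0 l)) <= 1) by (apply IHl; intros j1 j2 Hj; apply H2; lia). lia.
  - rewrite sum_zero. lia. intros y Hy. apply in_seq in Hy.
    pose proof (H1 y). destruct (f y) eqn:E2; auto. exfalso. apply (H2 y l); lia. Qed.

Lemma map_seq_shift {U : Type} (f : nat -> U) m s n :
  map f (seq (s + m) n) = map (fun k => f (k + m)) (seq s n).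
Proof. revert s; induction n; intros s; simpl; auto. f_equal. replace (S (s + m)) with (S s + m) by lia. apply IHn. Qed.

Section Gen.
Variable X : Type.

Definition inv (g h : X -> X) : Prop := (forall t, h (g t) = t) /\ (forall t, g (h t) = t).

Definition grp (H : (X -> X) -> Prop) : Prop :=
  H (fun t => t) /\ (forall g h, H g -> H h -> H (fun t => h (g t))) /\
  (forall g h, H g -> inv g h -> H h) /\ (forall g, H g -> exists h, inv g h).

Lemma inv_sym (g h : X -> X) : inv g h -> inv h g.
Proof. firstorder. Qed.

Lemma inv_uniq (g h h' : X -> X) : inv g h -> inv g h' -> h = h'.
Proof. intros [H1 H2] [H3 H4]. extensionality t.
  rewrite <- (H4 t) at 1. rewrite H1. reflexivity. Qed.

Lemma gen_group_grp_closed (T : (X->X) -> Prop) : 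
  (forall g, gen_group T g -> exists h, inv g h) -> grp (gen_group T).
Proof. intros Hb. split; [constructor|split;[intros; now constructor|split]].
  - intros g h Hg [H1 H2]. eapply gg_inv; eauto.
  - exact Hb. Qed.

Lemma gen_group_sub (T H : (X->X) -> Prop) : grp H -> (forall f, T f -> H f) ->
  forall g, gen_group T g -> H g.
Proof. intros (H1&H2&H3&_) HT g Hg. induction Hg; eauto.
  eapply H3; eauto. split; auto. Qed.

Lemma grp_bij_sub (T H : (X->X) -> Prop) : grp H -> (forall f, T f -> H f) ->
  grp (gen_group T).
Proof. intros HH HT. apply gen_group_grp_closed. intros g Hg.
  apply (gen_group_sub HH HT) in Hg. destruct HH as (_&_&_&H4). auto. Qed.

Lemma prod_list_fold (L : list (X -> X)) (acc : X -> X) :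
  fold_left (fun (acc : X -> X) (f : X -> X) => fun y => f (acc y)) L acc = fun t => prod_list L (acc t).
Proof. revert acc. induction L as [|u L IH]; intros acc; simpl.
  - reflexivity.
  - unfold prod_list; simpl. rewrite !IH. reflexivity. Qed.

Lemma prod_list_cons (u : X -> X) L t : prod_list (u :: L) t = prod_list L (u t).
Proof. unfold prod_list at 1. simpl. rewrite prod_list_fold. reflexivity. Qed.

Lemma prod_list_nil (t : X) : prod_list [] t = t.
Proof. reflexivity. Qed.

Lemma prod_list_app (L1 L2 : list (X -> X)) t : prod_list (L1 ++ L2) t = prod_list L2 (prod_list L1 t).
Proof. revert t; induction L1; intros t; simpl. reflexivity.
  rewrite !prod_list_cons. auto. Qed.

Lemma grp_prod (H : (X -> X) -> Prop) L : grp H -> Forall H L -> H (prod_list L).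
Proof. intros HH HL. induction HL.
  - destruct HH as [H0 _]. exact H0.
  - replace (prod_list (x :: l)) with (fun t => prod_list l (x t)).
    + destruct HH as (_&H2&_). auto.
    + extensionality t. now rewrite prod_list_cons. Qed.

Lemma Forall2_inv_map {K : Type} (u v : K -> X -> X) L :
  (forall k, In k L -> inv (u k) (v k)) -> Forall2 inv (map u L) (map v L).
Proof. induction L; simpl; intros H; constructor; auto. Qed.

Lemma prod_rev_inv U V : Forall2 inv U V -> inv (prod_list U) (prod_list (rev V)).
Proof. intros HF. induction HF as [|u v U V [I1 I2] _ [J1 J2]].
  - split; intros; reflexivity.
  - simpl. split; intros t; rewrite prod_list_cons, prod_list_app; simpl.
    + rewrite J1, I1. auto.
    + rewrite I2, J2. auto. Qed.

Lemma prod_list_flat_map {K : Type} (M : K -> list (X -> X)) L t :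
  prod_list (flat_map M L) t = prod_list (map (fun y => prod_list (M y)) L) t.
Proof. revert t; induction L; intros t; simpl; auto. rewrite prod_list_app, prod_list_cons, IHL. auto. Qed.

Section Der.
Variable H : (X -> X) -> Prop.
Hypothesis HH : grp H.

Definition D := derived H.

Lemma D_grp_id : D (fun t => t).
Proof. constructor. Qed.

Lemma D_mul (q1 q2 : X -> X) : D q1 -> D q2 -> D (fun t => q2 (q1 t)).
Proof. intros; now constructor. Qed.

Lemma D_sub (q : X -> X) : D q -> H q.
Proof. intros Hq. induction Hq as [|f Hf|g h _ IH1 _ IH2|g h _ IH Hi1 Hi2].
  - apply HH.
  - destruct Hf as (g&h&gi&hi&Hg&Hh&E1&E2&E3&E4&->).
    destruct HH as (_&Hm&Hi&_).
    assert (H gi) by (eapply Hi; [exact Hg|split; auto]).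
    assert (H hi) by (eapply Hi; [exact Hh|split; auto]).
    apply (Hm (fun y => g (hi (gi y))) h); [|exact Hh].
    apply (Hm (fun y => hi (gi y)) g); [|exact Hg].
    apply (Hm gi hi); assumption.
  - apply HH; auto.
  - destruct HH as (_&_&Hi&_). eapply Hi; eauto. split; auto. Qed.

Lemma D_conj (u ui q : X -> X) : H u -> inv u ui -> D q -> D (fun y => u (q (ui y))).
Proof. intros Hu [Ui1 Ui2] Hq.
  destruct HH as (Hid&Hm&Hi&Hb).
  assert (Hui : H ui) by (eapply Hi; [exact Hu| split; auto]).
  induction Hq as [|f Hf|g h _ IH1 _ IH2|g h _ IH Hi1 Hi2].
  - replace (fun y => u (ui y)) with (fun t : X => t) by (extensionality y; auto). constructor.
  - destruct Hf as (g&h&gi&hi&Hg&Hh&E1&E2&E3&E4&->).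
    apply gg_gen. exists (fun y => u (g (ui y))), (fun y => u (h (ui y))),
      (fun y => u (gi (ui y))), (fun y => u (hi (ui y))).
    repeat split.
    + apply (Hm (fun y => g (ui y))); auto.
    + apply (Hm (fun y => h (ui y))); auto.
    + intros y. rewrite Ui1, E1. auto.
    + intros y. rewrite Ui1, E2. auto.
    + intros y. rewrite Ui1, E3. auto.
    + intros y. rewrite Ui1, E4. auto.
    + extensionality y. rewrite !Ui1. reflexivity.
  - replace (fun y => u (h (g (ui y)))) with
      (fun t => (fun y => u (h (ui y))) ((fun y => u (g (ui y))) t))
      by (extensionality y; now rewrite Ui1).
    exact (gg_mul IH1 IH2).
  - eapply gg_inv. exact IH.
    + intros t. simpl. rewrite Ui1, Hi1, Ui2. auto.
    + intros t. simpl. rewrite Ui1, Hi2, Ui2. auto. Qed.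

Definition rel (u v : X -> X) : Prop := exists q, D q /\ forall y, u y = q (v y).

Lemma rel_refl (u : X -> X) : rel u u.
Proof. exists (fun t => t). split; [constructor|auto]. Qed.

Lemma rel_trans (u v w : X -> X) : rel u v -> rel v w -> rel u w.
Proof. intros (q1&Hq1&E1) (q2&Hq2&E2). exists (fun t => q1 (q2 t)).
  split. apply D_mul; auto. intros y. rewrite E1, E2. auto. Qed.

Lemma rel_left (x u v : X -> X) : rel u v -> rel (fun t => u (x t)) (fun t => v (x t)).
Proof. intros (q&Hq&E). exists q. split; auto. Qed.

Lemma rel_right (x u v : X -> X) : H x -> rel u v -> rel (fun t => x (u t)) (fun t => x (v t)).
Proof. intros Hx (q&Hq&E). destruct HH as (_&_&_&Hb).
  destruct (Hb x Hx) as [xi Hxi].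
  exists (fun y => x (q (xi y))). split.
  - apply D_conj; auto.
  - intros y. rewrite E. destruct Hxi as [I1 I2]. rewrite I1. auto. Qed.

Lemma rel_swap (x y : X -> X) : H x -> H y -> rel (fun t => y (x t)) (fun t => x (y t)).
Proof. intros Hx Hy. destruct HH as (_&_&_&Hb).
  destruct (Hb x Hx) as [xi [I1 I2]]. destruct (Hb y Hy) as [yi [J1 J2]].
  exists (fun t => y (x (yi (xi t)))). split.
  - apply gg_gen. exists x, y, xi, yi. repeat split; auto.
  - intros t. simpl. rewrite I1, J1. auto. Qed.

Lemma perm_rel (L1 L2 : list (X -> X)) : Permutation L1 L2 -> Forall H L1 -> rel (prod_list L1) (prod_list L2).
Proof. intros P. induction P; intros HF.
  - apply rel_refl.
  - inversion HF; subst.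
    replace (prod_list (x :: l)) with (fun t => prod_list l (x t)) by (extensionality t; now rewrite prod_list_cons).
    replace (prod_list (x :: l')) with (fun t => prod_list l' (x t)) by (extensionality t; now rewrite prod_list_cons).
    apply rel_left. auto.
  - inversion HF; subst. inversion H3; subst.
    replace (prod_list (y :: x :: l)) with (fun t => prod_list l ((fun s => x (y s)) t)) by (extensionality t; now rewrite !prod_list_cons).
    replace (prod_list (x :: y :: l)) with (fun t => prod_list l ((fun s => y (x s)) t)) by (extensionality t; now rewrite !prod_list_cons).
    apply rel_right. apply grp_prod; auto. apply rel_swap; auto.
  - eapply rel_trans. apply IHP1; auto. apply IHP2.
    eapply Permutation_Forall; eauto. Qed.

Lemma rel_mul (u u' v v' : X -> X) : H v' -> rel u u' -> rel v v' ->
  rel (fun t => v (u t)) (fun t => v' (u' t)).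
Proof. intros Hv' R1 R2. eapply rel_trans.
  - apply rel_left with (u := v) (v := v'). exact R2.
  - apply rel_right; auto. Qed.

End Der.
End Gen.
Unset Implicit Arguments.
Section CSs.
Variable X : Type.
Variable x0 : X.
Variable A : (X -> X) -> Prop.
Variables B Sg : (list X -> list X) -> Prop.
Hypothesis HCS : is_CS x0 A B.
Hypothesis HS : generates Sg B.

Lemma A_grp : grp A.
Proof. destruct HCS as (H1&(Hid&Hm&Hinv)&_).
  split; [auto|split;[auto|split]].
  - intros g h Hg Hgh. destruct (Hinv g Hg) as (h'&Hh'&E1&E2).
    replace h with h'; auto. eapply inv_uniq. split; eauto. auto.
  - intros g Hg. destruct (Hinv g Hg) as (h'&Hh'&E1&E2). exists h'. split; auto. Qed.

Lemma A_id : A (fun t => t).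
Proof. apply A_grp. Qed.
Lemma A_mul g h : A g -> A h -> A (fun t => h (g t)).
Proof. apply A_grp. Qed.
Lemma A_inv g : A g -> exists h, A h /\ inv g h.
Proof. intros Hg. destruct A_grp as (_&_&Hi&Hb). destruct (Hb g Hg) as [h Hh].
  exists h; split; eauto. Qed.

Lemma A_iter a n : A a -> A (Nat.iter n a).
Proof. intros Ha. induction n.
  - apply A_id.
  - replace (Nat.iter (S n) a) with (fun t => a (Nat.iter n a t)) by reflexivity.
    apply A_mul; auto. Qed.

Lemma iter_inj (a : X -> X) n : (forall u v, a u = a v -> u = v) ->
  forall u v, Nat.iter n a u = Nat.iter n a v -> u = v.
Proof. intros Hi. induction n; simpl; auto. Qed.

Lemma A_injective a : A a -> forall u v, a u = a v -> u = v.
Proof. intros Ha u v E. destruct (A_inv a Ha) as (h&_&H1&_).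
  rewrite <- (H1 u), <- (H1 v), E. auto. Qed.

Lemma tree_prefix (g : list X -> list X) : is_tree_aut g ->
  forall w v, exists z, g (w ++ v) = g w ++ z.
Proof. intros (_&_&Hg) w v. induction v as [|y v IH] using rev_ind.
  - exists []. rewrite !app_nil_r. auto.
  - destruct IH as [z Hz]. destruct (Hg (w ++ v) y) as [y' Hy'].
    exists (z ++ [y']). rewrite app_assoc, Hy', Hz, app_assoc. auto. Qed.

Lemma B_head b x v : B b -> b (x :: v) = x :: section b [x] v.
Proof. intros Hb. destruct HCS as (_&_&_&HB&_).
  destruct (HB b Hb) as [Ht Hs].
  destruct (tree_prefix b Ht [x] v) as [z Hz]. simpl in Hz.
  unfold section. rewrite Hz, Hs. simpl. rewrite Hz, Hs. simpl. auto. Qed.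

Lemma B_nil b : B b -> b [] = [].
Proof. intros Hb. destruct HCS as (_&_&_&HB&_). destruct (HB b Hb) as ((_&E&_)&_). auto. Qed.

Lemma B_zero b v : B b -> b (x0 :: v) = x0 :: b v.
Proof. intros Hb. rewrite B_head; auto. destruct HCS as (_&_&_&_&_&H6&_).
  rewrite H6; auto. Qed.

Lemma B_nz b x v : B b -> x <> x0 -> b (x :: v) = x :: rooted (secA b x) v.
Proof. intros Hb Hx. rewrite B_head; auto. destruct HCS as (_&_&_&_&_&_&H7&_).
  rewrite (proj2 (H7 b x Hb Hx)). auto. Qed.

Lemma B_secA b x : B b -> x <> x0 -> A (secA b x).
Proof. intros Hb Hx. destruct HCS as (_&_&_&_&_&_&H7&_). apply H7; auto. Qed.

Lemma B_mul g h : B g -> B h -> B (fun t => h (g t)).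
Proof. destruct HCS as (_&_&_&_&(_&Hm&_)&_). auto. Qed.
Lemma B_id : B (fun t => t).
Proof. destruct HCS as (_&_&_&_&(Hid&_)&_). auto. Qed.

Lemma B_inv g h : B g -> (forall t, h (g t) = t) -> (forall t, g (h t) = t) -> B h.
Proof. intros Hg E1 E2. destruct HCS as (_&_&_&_&(_&_&Hi)&_).
  destruct (Hi g Hg) as (h'&Hh'&F1&F2).
  replace h with h'; auto. extensionality t. rewrite <- (E2 t) at 1. rewrite F1. auto. Qed.

Lemma B_inv_ex g : B g -> exists h, B h /\ (forall t, h (g t) = t) /\ (forall t, g (h t) = t).
Proof. intros Hg. destruct HCS as (_&_&_&_&(_&_&Hi)&_). auto. Qed.

Lemma S_B s : Sg s -> B s.
Proof. destruct HS as [H1 _]. auto. Qed.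

Lemma secA_inv s si y : B s -> (forall t, si (s t) = t) -> (forall t, s (si t) = t) ->
  y <> x0 -> inv (secA s y) (secA si y).
Proof. intros Hs E1 E2 Hy. assert (Hsi : B si) by (eapply B_inv; eauto).
  split; intros z.
  - pose proof (E1 [y; z]) as F. rewrite (B_nz s) in F; auto. simpl in F.
    rewrite (B_nz si) in F; auto. simpl in F. congruence.
  - pose proof (E2 [y; z]) as F. rewrite (B_nz si) in F; auto. simpl in F.
    rewrite (B_nz s) in F; auto. simpl in F. congruence. Qed.


Definition eqX (x y : X) : {x = y} + {x <> y} := excluded_middle_informative (x = y).

Inductive letter := LA (a : X -> X) | LB (b : list X -> list X).

Definition binv (s b : list X -> list X) := (forall t, b (s t) = t) /\ (forall t, s (b t) = t).

Definition goodL (l : letter) : Prop :=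
  match l with LA a => A a | LB b => B b /\ (Sg b \/ exists s, Sg s /\ binv s b) end.
Definition good (w : list letter) := Forall goodL w.

Definition evalL (l : letter) : list X -> list X :=
  match l with LA a => rooted a | LB b => b end.
Fixpoint evalW (w : list letter) (t : list X) : list X :=
  match w with [] => t | l :: w' => evalW w' (evalL l t) end.
Definition permL (l : letter) : X -> X :=
  match l with LA a => a | LB _ => fun y => y end.
Fixpoint permW (w : list letter) (x : X) : X :=
  match w with [] => x | l :: w' => permW w' (permL l x) end.
Definition secB (b : list X -> list X) (y : X) : list letter :=
  if eqX y x0 then [LB b] else [LA (secA b y)].
Definition secL (l : letter) (x : X) : list letter :=
  match l with LA _ => [] | LB b => secB b x end.
Fixpoint secW (w : list letter) (x : X) : list letter :=
  match w with [] => [] | l :: w' => secL l x ++ secW w' (permL l x) end.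
Fixpoint cntW (w : list letter) : nat :=
  match w with [] => 0 | LA _ :: w' => cntW w' | LB _ :: w' => S (cntW w') end.
Fixpoint pw (w : list letter) (n : nat) : list letter :=
  match n with 0 => [] | S n' => w ++ pw w n' end.

Lemma evalW_app w1 w2 t : evalW (w1 ++ w2) t = evalW w2 (evalW w1 t).
Proof. revert t; induction w1; simpl; auto. Qed.
Lemma permW_app w1 w2 t : permW (w1 ++ w2) t = permW w2 (permW w1 t).
Proof. revert t; induction w1; simpl; auto. Qed.
Lemma secW_app w1 w2 x : secW (w1 ++ w2) x = secW w1 x ++ secW w2 (permW w1 x).
Proof. revert x; induction w1; intros x; simpl; auto. rewrite IHw1, app_assoc. auto. Qed.
Lemma cntW_app w1 w2 : cntW (w1 ++ w2) = cntW w1 + cntW w2.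
Proof. induction w1 as [|[]]; simpl; auto. Qed.

Lemma good_app w1 w2 : good w1 -> good w2 -> good (w1 ++ w2).
Proof. intros; apply Forall_app; auto. Qed.

Lemma good_secB b y : goodL (LB b) -> good (secB b y).
Proof. intros Hb. unfold secB. destruct (eqX y x0).
  - constructor; auto.
  - constructor; [|constructor]. simpl. apply B_secA; auto. apply Hb. Qed.

Lemma good_secW w x : good w -> good (secW w x).
Proof. revert x; induction w as [|l w IH]; intros x Hw; simpl. constructor.
  inversion Hw; subst. apply good_app; auto. destruct l; simpl. constructor.
  apply good_secB; auto. Qed.

Lemma evalL_cons l x v : goodL l -> evalL l (x :: v) = permL l x :: evalW (secL l x) v.
Proof. destruct l as [a|b]; simpl; intros Hl; auto.
  unfold secB. destruct (eqX x x0) as [->|n]; simpl.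
  - apply B_zero, Hl.
  - apply B_nz; auto. apply Hl. Qed.

Lemma evalL_nil l : goodL l -> evalL l [] = [].
Proof. destruct l; simpl; auto. intros [Hb _]. apply B_nil; auto. Qed.

Lemma evalW_nil w : good w -> evalW w [] = [].
Proof. induction w; simpl; intros Hw; auto. inversion Hw; subst. rewrite evalL_nil; auto. Qed.

Lemma evalW_cons w x v : good w -> evalW w (x :: v) = permW w x :: evalW (secW w x) v.
Proof. revert x v; induction w as [|l w IH]; intros x v Hw; simpl; auto.
  inversion Hw; subst. rewrite evalL_cons; auto. rewrite IH; auto. rewrite evalW_app. auto. Qed.

Lemma evalW_pw w n t : evalW (pw w n) t = Nat.iter n (evalW w) t.
Proof. revert t; induction n; intros t; simpl; auto. rewrite evalW_app, IHn.
  rewrite <- Nat.iter_succ_r. reflexivity. Qed.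

Lemma permW_pw w n t : permW (pw w n) t = Nat.iter n (permW w) t.
Proof. revert t; induction n; intros t; simpl; auto. rewrite permW_app, IHn.
  rewrite <- Nat.iter_succ_r. reflexivity. Qed.

Lemma pw_add w p q : pw w (p + q) = pw w p ++ pw w q.
Proof. induction p; simpl; auto. rewrite IHp, app_assoc. auto. Qed.

Lemma good_pw w n : good w -> good (pw w n).
Proof. intros; induction n; simpl. constructor. apply good_app; auto. Qed.

Lemma flat_map_shift {T : Type} (f : nat -> list T) s n :
  flat_map f (seq (S s) n) = flat_map (fun j => f (S j)) (seq s n).
Proof. revert s; induction n; intros s; simpl; auto. rewrite IHn. auto. Qed.

Lemma secW_pw w n x : secW (pw w n) x =
  flat_map (fun j => secW w (Nat.iter j (permW w) x)) (seq 0 n).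
Proof. revert x; induction n; intros x; simpl; auto.
  rewrite secW_app, IHn. f_equal.
  rewrite flat_map_shift. apply flat_map_ext. intros j. rewrite Nat.iter_succ_r. auto. Qed.

Lemma secW_pw_mul w l c x : Nat.iter l (permW w) x = x ->
  secW (pw w (l * c)) x = pw (secW (pw w l) x) c.
Proof. intros E. induction c; simpl. rewrite Nat.mul_0_r. auto.
  rewrite Nat.mul_succ_r, Nat.add_comm, pw_add, secW_app, permW_pw, E, IHc. auto. Qed.

Definition fB (b : list X -> list X) (y : X) : X -> X :=
  if eqX y x0 then (fun t => t) else secA b y.

Fixpoint blet (w : list letter) : list ((list X -> list X) * (X -> X)) :=
  match w with
  | [] => []
  | LA a :: w' => map (fun bp => (fst bp, fun y => snd bp (a y))) (blet w')
  | LB b :: w' => (b, fun y => y) :: blet w'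
  end.

Lemma flat_map_map' {T U V : Type} (f : T -> U) (g : U -> list V) L :
  flat_map g (map f L) = flat_map (fun y => g (f y)) L.
Proof. induction L; simpl; auto. rewrite IHL; auto. Qed.

Lemma secW_blet w x : secW w x = flat_map (fun bp => secB (fst bp) (snd bp x)) (blet w).
Proof. revert x; induction w as [|[a|b] w IH]; intros x; simpl; auto.
  rewrite IH, flat_map_map'. auto. rewrite IH. auto. Qed.

Lemma cntW_blet w : cntW w = length (blet w).
Proof. induction w as [|[a|b] w IH]; simpl; auto. rewrite length_map; auto. Qed.

Lemma blet_good w : good w -> forall bp, In bp (blet w) -> goodL (LB (fst bp)) /\ A (snd bp).
Proof. induction w as [|[a|b] w IH]; simpl; intros Hw bp Hin. contradiction.
  - inversion Hw; subst. apply in_map_iff in Hin. destruct Hin as (bp'&<-&Hin').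
    destruct (IH H2 bp' Hin') as [G1 G2]. split; simpl; auto. apply A_mul; auto.
  - inversion Hw; subst. destruct Hin as [<-|Hin]; [split; [exact H1|apply A_id]|exact (IH H2 bp Hin)]. Qed.

Lemma cntW_secB b y : cntW (secB b y) = if eqX y x0 then 1 else 0.
Proof. unfold secB. destruct (eqX y x0); auto. Qed.

Lemma permW_secB b y : permW (secB b y) = fB b y.
Proof. unfold secB, fB. destruct (eqX y x0); auto. Qed.

Lemma permW_flat_map {T : Type} (g : T -> list letter) L t :
  permW (flat_map g L) t = prod_list (map (fun y => permW (g y)) L) t.
Proof. revert t; induction L; intros t; simpl; auto. rewrite permW_app, IHL, prod_list_cons. auto. Qed.

Lemma cntW_flat_map {T : Type} (g : T -> list letter) L :
  cntW (flat_map g L) = list_sum (map (fun y => cntW (g y)) L).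
Proof. induction L; simpl; auto. rewrite cntW_app, IHL. auto. Qed.

Lemma good_permW w : good w -> A (permW w).
Proof. induction w as [|[a|b] w IH]; intros Hw; inversion Hw; subst; simpl.
  apply A_id. replace (fun x => permW w (a x)) with (fun x => permW w (a x)) by auto.
  apply (A_mul a (permW w)); auto. auto. Qed.


Lemma words_gen (T : (list X -> list X) -> Prop) :
  (forall g, T g -> exists w wi, good w /\ good wi /\ (forall t, evalW w t = g t) /\
      (forall t, evalW wi (g t) = t) /\ (forall t, g (evalW wi t) = t)) ->
  forall g, gen_group T g -> exists w wi, good w /\ good wi /\ (forall t, evalW w t = g t) /\
      (forall t, evalW wi (g t) = t) /\ (forall t, g (evalW wi t) = t).
Proof. intros HT g Hg. induction Hg as [|s Hs|g h _ IH1 _ IH2|g h _ IH E1 E2].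
  - exists [], []. repeat split; try constructor; auto.
  - auto.
  - destruct IH1 as (w1&wi1&G1&Gi1&F1&I1&J1). destruct IH2 as (w2&wi2&G2&Gi2&F2&I2&J2).
    exists (w1 ++ w2), (wi2 ++ wi1). repeat split; try (apply good_app; auto); intros t.
    + rewrite evalW_app, F1, F2. auto.
    + rewrite evalW_app, I2, I1. auto.
    + rewrite evalW_app. rewrite J1, J2. auto.
  - destruct IH as (w&wi&G&Gi&F&I&J). exists wi, w. repeat split; auto; intros t.
    + transitivity (h (g (evalW wi t))). rewrite E1; auto. rewrite J; auto.
    + rewrite F. auto.
    + rewrite F. auto. Qed.

Lemma words_S g : gen_group Sg g -> exists w wi, good w /\ good wi /\ (forall t, evalW w t = g t) /\
      (forall t, evalW wi (g t) = t) /\ (forall t, g (evalW wi t) = t).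
Proof. apply words_gen. intros s Hs. destruct (B_inv_ex s (S_B s Hs)) as (si&Hsi&E1&E2).
  exists [LB s], [LB si]. repeat split; auto.
  - constructor; [|constructor]. simpl. split; auto. apply S_B; auto.
  - constructor; [|constructor]. simpl. split; auto. right. exists s. split; auto. split; auto. Qed.

Lemma words_CS g : CS_group A B g -> exists w wi, good w /\ good wi /\ (forall t, evalW w t = g t) /\
      (forall t, evalW wi (g t) = t) /\ (forall t, g (evalW wi t) = t).
Proof. apply words_gen. intros s [(a&Ha&->)|Hb].
  - destruct (A_inv a Ha) as (ai&Hai&E1&E2). exists [LA a], [LA ai].
    repeat split; try (constructor; [|constructor]); auto; intros [|y v]; simpl; auto; congruence.
  - apply words_S. destruct HS as [_ H2]. apply H2; auto. Qed.

Lemma iter_mul_id {T : Type} (f : T -> T) N : (forall t, Nat.iter N f t = t) ->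
  forall c t, Nat.iter (c * N) f t = t.
Proof. intros H c. induction c; intros t; simpl; auto.
  rewrite Nat.iter_add, H, IHc. auto. Qed.

Lemma iter_ext {T : Type} (f g : T -> T) n t : (forall y, f y = g y) -> Nat.iter n f t = Nat.iter n g t.
Proof. intros E; induction n; simpl; auto. rewrite IHn, E. auto. Qed.

Lemma list_lcm {Y : Type} (Pr : Y -> nat -> Prop) (L : list Y) :
  (forall y N m, 0 < m -> Pr y N -> Pr y (m * N)) ->
  (forall y, In y L -> exists N, 0 < N /\ Pr y N) ->
  exists N, 0 < N /\ forall y, In y L -> Pr y N.
Proof. intros Hm. induction L as [|y L IH]; intros HL.
  - exists 1. split; auto. intros y [].
  - destruct IH as (N1&P1&Q1). intros; apply HL; right; auto.
    destruct (HL y (or_introl eq_refl)) as (N2&P2&Q2).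
    exists (N2 * N1). split. lia. intros z [<-|Hz].
    + rewrite Nat.mul_comm. apply Hm; auto.
    + apply Hm; auto. Qed.

Lemma iter_rooted n (u : X -> X) v : Nat.iter n (rooted u) v = rooted (Nat.iter n u) v.
Proof. destruct v as [|y v]; induction n; simpl; try rewrite IHn; auto. Qed.

Lemma iter_B_zero b n v : B b -> Nat.iter n b (x0 :: v) = x0 :: Nat.iter n b v.
Proof. intros Hb. induction n; simpl; auto. rewrite IHn, B_zero; auto. Qed.

Lemma iter_B_nz b n x v : B b -> x <> x0 -> Nat.iter n b (x :: v) = x :: Nat.iter n (rooted (secA b x)) v.
Proof. intros Hb Hx. induction n; simpl; auto. rewrite IHn, B_nz; auto. Qed.

Lemma iter_B_nil b n : B b -> Nat.iter n b [] = [].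
Proof. intros Hb. induction n; simpl; auto. rewrite IHn, B_nil; auto. Qed.

Lemma B_iter_id b n : B b -> (forall y, y <> x0 -> forall t, Nat.iter n (secA b y) t = t) ->
  forall v, Nat.iter n b v = v.
Proof. intros Hb Hy v. induction v as [|x v IH]. apply iter_B_nil; auto.
  destruct (eqX x x0) as [->|n0].
  - rewrite iter_B_zero, IH; auto.
  - rewrite iter_B_nz, iter_rooted; auto. destruct v; simpl; auto. rewrite Hy; auto. Qed.

Section Main.
Hypothesis HAper : periodic A.
Hypothesis Het : eventually_trivial x0 A Sg.
Variable Eexp : nat.
Hypothesis HE : 0 < Eexp.
Variable T : (X -> X) -> Prop.
Hypothesis HT_id : T (fun t => t).
Hypothesis HT_mul : forall g h, T g -> T h -> T (fun t => h (g t)).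
Hypothesis HT_E : forall u, T u -> forall t, Nat.iter Eexp u t = t.
Hypothesis HT_B : forall b, B b -> exists L, forall y, ~ In y L -> y <> x0 /\ T (secA b y).

Lemma B_per b : B b -> exists n, 0 < n /\ forall v, Nat.iter n b v = v.
Proof. intros Hb. destruct (HT_B b Hb) as [L HL].
  destruct (list_lcm (fun y N => y <> x0 -> forall t, Nat.iter N (secA b y) t = t) L) as (N&HN&HNL).
  - intros y N m Hm H Hy t. apply iter_mul_id; auto.
  - intros y _. destruct (eqX y x0) as [->|Hy].
    + exists 1. split; auto. intros []; auto.
    + destruct (HAper (secA b y) (B_secA b y Hb Hy)) as (N&HN&HN'). exists N; auto.
  - exists (Eexp * N). split. lia. apply B_iter_id; auto. intros y Hy t.
    destruct (classic (In y L)) as [Hin|Hnin].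
    + apply iter_mul_id. intros; apply HNL; auto.
    + rewrite Nat.mul_comm. apply iter_mul_id. apply HT_E. apply (HL y Hnin). Qed.

Definition orbit (a : X -> X) (x : X) (l : nat) : Prop :=
  0 < l /\ Nat.iter l a x = x /\ forall j, 0 < j < l -> Nat.iter j a x <> x.

Definition ind (y : X) : nat := if eqX y x0 then 1 else 0.

Lemma iter_comm (f : X -> X) n m t : Nat.iter n f (Nat.iter m f t) = Nat.iter m f (Nat.iter n f t).
Proof. rewrite <- !Nat.iter_add, Nat.add_comm. auto. Qed.

Lemma iter_cancel (f g : X -> X) n t : (forall y, g (f y) = y) -> Nat.iter n g (Nat.iter n f t) = t.
Proof. intros H. revert t; induction n; intros t; auto.
  rewrite (Nat.iter_succ_r n _ g). simpl. rewrite H. apply IHn. Qed.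

Section Word.
Variable w : list letter.
Hypothesis Hw : good w.
Let a := permW w.
Let BL := blet w.

Lemma a_A : A a.
Proof. apply good_permW; auto. Qed.

Lemma a_inj u v : a u = a v -> u = v.
Proof. apply A_injective, a_A. Qed.

Lemma h_eq x l : secW (pw w l) x =
  flat_map (fun j => flat_map (fun bp => secB (fst bp) (snd bp (Nat.iter j a x))) BL) (seq 0 l).
Proof. rewrite secW_pw. apply flat_map_ext. intros j. apply secW_blet. Qed.

Lemma cnt_h x l : cntW (secW (pw w l) x) =
  list_sum (map (fun bp => list_sum (map (fun j => ind (snd bp (Nat.iter j a x))) (seq 0 l))) BL).
Proof. rewrite h_eq, cntW_flat_map. rewrite <- sum_exchange. f_equal. apply map_ext. intros j.
  rewrite cntW_flat_map. f_equal. apply map_ext. intros bp. rewrite cntW_secB. reflexivity. Qed.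

Lemma per_bp_le1 x l (p : X -> X) : orbit a x l -> A p ->
  list_sum (map (fun j => ind (p (Nat.iter j a x))) (seq 0 l)) <= 1.
Proof. intros (Hl&Hlx&Hmin) Hp. apply sum_atmost1.
  - intros j. unfold ind. destruct (eqX _ _); auto.
  - intros j1 j2 Hj E1 E2. unfold ind in E1, E2.
    destruct (eqX (p (Nat.iter j1 a x)) x0) as [F1|]; [|discriminate].
    destruct (eqX (p (Nat.iter j2 a x)) x0) as [F2|]; [|discriminate].
    rewrite <- F2 in F1. apply (A_injective p Hp) in F1.
    replace j2 with ((j2 - j1) + j1) in F1 by lia. rewrite Nat.iter_add, iter_comm in F1.
    apply (iter_inj a j1 a_inj) in F1. apply (Hmin (j2 - j1)); auto. lia. Qed.

Lemma cnt_h_le x l : orbit a x l -> cntW (secW (pw w l) x) <= cntW w.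
Proof. intros Ho. rewrite cnt_h, cntW_blet. apply sum_le_length.
  intros bp Hbp. apply per_bp_le1; auto. apply (blet_good w Hw bp Hbp). Qed.

Lemma cnt_h_eq x l : orbit a x l -> cntW (secW (pw w l) x) = cntW w ->
  forall bp, In bp BL -> exists j, j < l /\ snd bp (Nat.iter j a x) = x0.
Proof. intros Ho Eq bp Hbp. rewrite cnt_h, cntW_blet in Eq.
  pose proof (sum_eq_length _ _ (fun bp Hbp => per_bp_le1 x l (snd bp) Ho (proj2 (blet_good w Hw bp Hbp))) Eq bp Hbp) as F.
  destruct (sum_pos_ex (fun j => ind (snd bp (Nat.iter j a x))) (seq 0 l)) as (j&Hj&Hp). lia.
  apply in_seq in Hj. exists j. split. lia. unfold ind in Hp. destruct (eqX _ _); auto. lia. Qed.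


Definition HG x := Hgroup x0 A Sg a x.

Lemma HG_grp x : grp (HG x).
Proof. apply (@grp_bij_sub X _ A). apply A_grp.
  intros f (b&y&Hb&(c&k&_&_&Hy)&->). apply B_secA; auto. apply S_B; auto. Qed.

Lemma HG_secA x b y : goodL (LB b) -> Xset x0 A a x y -> HG x (secA b y).
Proof. intros [Hb [Hs|(s&Hs&E1&E2)]] Hx.
  - apply gg_gen. exists b, y. auto.
  - assert (Hy : y <> x0) by (destruct Hx as (c&k&_&_&Hy); auto).
    destruct (secA_inv s b y (S_B s Hs) E1 E2 Hy) as [I1 I2].
    apply (gg_inv (secA b y) (g := secA s y)); auto.
    apply gg_gen. exists s, y. auto. Qed.

Lemma gens_HG x f : sigma_gens x0 A Sg a x f -> HG x f.
Proof. intros (c&b&l&Hc&Hb&Hl&Hcl&Hmin&->). apply grp_prod. apply HG_grp.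
  apply Forall_forall. intros f Hf. apply in_map_iff in Hf. destruct Hf as (k&<-&Hk).
  apply in_seq in Hk. apply gg_gen. exists b, (Nat.iter k c x0). split; auto. split; auto.
  exists c, k. split; auto. split; auto. apply Hmin. lia. Qed.

Lemma gensgrp_HG x f : gen_group (sigma_gens x0 A Sg a x) f -> HG x f.
Proof. apply gen_group_sub. apply HG_grp. apply gens_HG. Qed.

Definition Lbb x l (bp : (list X -> list X) * (X -> X)) : list (X -> X) :=
  map (fun j => fB (fst bp) (snd bp (Nat.iter j a x))) (seq 0 l).

Lemma per_bp x l b p : orbit a x l -> goodL (LB b) -> A p ->
  (exists j, j < l /\ p (Nat.iter j a x) = x0) ->
  exists G, gen_group (sigma_gens x0 A Sg a x) G /\ Forall (HG x) (Lbb x l (b, p)) /\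
    rel (HG x) (prod_list (Lbb x l (b, p))) G.
Proof. intros (Hl&Hlx&Hmin) Hb Hp (jb&Hjb&Ejb). unfold Lbb; simpl.
  destruct (A_inv p Hp) as (pi&Hpi&Pi1&Pi2).
  destruct (A_inv a a_A) as (ai&Hai&Ai1&Ai2).
  set (d := fun y => p (a (pi y))).
  assert (Hd : forall k y, Nat.iter k d y = p (Nat.iter k a (pi y))).
  { induction k; intros y; simpl. auto. rewrite IHk. unfold d. rewrite Pi1. auto. }
  assert (Hpix : pi x0 = Nat.iter jb a x) by (rewrite <- Ejb, Pi1; auto).
  assert (Hdk : forall k, Nat.iter k d x0 = p (Nat.iter (k + jb) a x)).
  { intros k. rewrite Hd, Hpix, Nat.iter_add. auto. }
  assert (Hdl : Nat.iter l d x0 = x0).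
  { rewrite Hdk, Nat.add_comm, Nat.iter_add, Hlx. auto. }
  assert (Hdmin : forall k, 0 < k < l -> Nat.iter k d x0 <> x0).
  { intros k Hk E. rewrite Hdk, <- Ejb in E. apply (A_injective p Hp) in E.
    rewrite Nat.add_comm, Nat.iter_add in E. apply (iter_inj a jb a_inj) in E.
    apply (Hmin k Hk E). }
  assert (HC : Cset x0 A a x d).
  { exists (fun y => Nat.iter jb ai (pi y)), (fun y => p (Nat.iter jb a y)).
    split. apply A_mul; auto. apply A_iter; auto.
    split. rewrite Hpix. apply iter_cancel; auto.
    split. apply A_mul; auto. apply A_iter. apply a_A.
    split. intros y. rewrite iter_cancel; auto.
    split. intros y. rewrite Pi1. apply iter_cancel; auto.
    intros y. unfold d. f_equal. rewrite <- Nat.iter_succ_r. simpl. rewrite iter_cancel; auto. }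
  assert (HX : forall k, Nat.iter k d x0 <> x0 -> Xset x0 A a x (Nat.iter k d x0)).
  { intros k Hk. exists d, k. auto. }
  set (phi := fun j => fB b (p (Nat.iter j a x))).
  set (psi := fun k => fB b (Nat.iter k d x0)).
  assert (HP : Permutation (map phi (seq 0 l)) (map psi (seq 0 l))).
  { assert (S1 : seq 0 l = seq 0 jb ++ seq (0 + jb) (l - jb)) by (rewrite <- seq_app; f_equal; lia).
    assert (S2 : seq 0 l = seq 0 (l - jb) ++ seq (0 + (l - jb)) jb) by (rewrite <- seq_app; f_equal; lia).
    assert (M1 : map phi (seq 0 l) = map phi (seq 0 jb) ++ map psi (seq 0 (l - jb))).
    { rewrite S1, map_app. f_equal. rewrite map_seq_shift. apply map_ext.
      intros k. unfold psi, phi. rewrite Hdk. auto. }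
    assert (M2 : map psi (seq 0 l) = map psi (seq 0 (l - jb)) ++ map phi (seq 0 jb)).
    { rewrite S2, map_app. f_equal. rewrite map_seq_shift. apply map_ext.
      intros k. unfold psi, phi. rewrite Hdk. do 2 f_equal.
      replace (k + (l - jb) + jb) with (k + l) by lia. rewrite Nat.iter_add, Hlx. auto. }
    rewrite M1, M2. apply Permutation_app_comm. }
  assert (HFpsi : Forall (HG x) (map psi (seq 0 l))).
  { apply Forall_forall. intros f Hf. apply in_map_iff in Hf. destruct Hf as (k&<-&_).
    unfold psi, fB. destruct (eqX _ _). apply HG_grp. apply HG_secA; auto. }
  assert (HFphi : Forall (HG x) (map phi (seq 0 l))).
  { eapply Permutation_Forall. apply Permutation_sym; exact HP. auto. }
  set (K := map (fun k => secA b (Nat.iter k d x0)) (seq 1 (l - 1))).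
  assert (HK : prod_list (map psi (seq 0 l)) = prod_list K).
  { extensionality t.
    assert (Sq : seq 0 l = 0 :: seq 1 (l - 1)) by (destruct l; [lia|]; simpl; rewrite Nat.sub_0_r; auto).
    rewrite Sq. cbn [map]. rewrite prod_list_cons.
    assert (psi 0 t = t) as ->. { unfold psi, fB. simpl. destruct (eqX x0 x0) as [_|n]; [auto|congruence]. }
    unfold K. f_equal. apply map_ext_in. intros k Hk. apply in_seq in Hk. unfold psi, fB.
    destruct (eqX _ _) as [Ek|]; auto. exfalso. apply (Hdmin k); auto. lia. }
  assert (HFK : Forall (HG x) K).
  { apply Forall_forall. intros f Hf. unfold K in Hf. apply in_map_iff in Hf. destruct Hf as (k&<-&Hk).
    apply in_seq in Hk. apply HG_secA; auto. apply HX. apply Hdmin. lia. }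
  assert (R1 : rel (HG x) (prod_list (map phi (seq 0 l))) (prod_list K)).
  { rewrite <- HK. apply perm_rel; auto. apply HG_grp. }
  destruct Hb as [HbB [Hs|(s&Hs&E1&E2)]].
  - exists (prod_list K). split; [|split; auto].
    apply gg_gen. exists d, b, l. repeat split; auto.
  - exists (prod_list (rev K)). split; [|split; auto].
    + set (Ks := map (fun k => secA s (Nat.iter k d x0)) (seq 1 (l - 1))).
      assert (Hinv : inv (prod_list Ks) (prod_list (rev K))).
      { apply prod_rev_inv. apply Forall2_inv_map. intros k Hk. apply in_seq in Hk.
        apply secA_inv; auto. apply S_B; auto. apply Hdmin. lia. }
      destruct Hinv as [I1 I2]. apply (gg_inv _ (g := prod_list Ks)); auto.
      apply gg_gen. exists d, s, l. repeat split; auto.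
    + eapply rel_trans. exact R1. apply perm_rel; auto. apply HG_grp. apply Permutation_rev. Qed.

Lemma combine x l L : orbit a x l ->
  (forall bp, In bp L -> goodL (LB (fst bp)) /\ A (snd bp) /\ exists j, j < l /\ snd bp (Nat.iter j a x) = x0) ->
  exists P, gen_group (sigma_gens x0 A Sg a x) P /\ Forall (HG x) (flat_map (Lbb x l) L) /\
    rel (HG x) (prod_list (flat_map (Lbb x l) L)) P.
Proof. intros Ho. induction L as [|[b p] L IH]; intros HL.
  - exists (fun t => t). split. constructor. split. constructor. apply rel_refl.
  - destruct (HL (b, p) (or_introl eq_refl)) as (G1&G2&G3).
    destruct (per_bp x l b p Ho G1 G2 G3) as (G&HG1&HG2&HG3).
    destruct IH as (P&HP1&HP2&HP3). intros; apply HL; right; auto.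
    exists (fun t => P (G t)). split. apply gg_mul; auto. simpl. split.
    apply Forall_app; auto.
    replace (prod_list (Lbb x l (b, p) ++ flat_map (Lbb x l) L)) with
      (fun t => prod_list (flat_map (Lbb x l) L) (prod_list (Lbb x l (b, p)) t))
      by (extensionality t; rewrite prod_list_app; auto).
    apply rel_mul; auto. apply HG_grp. apply gensgrp_HG; auto. Qed.

Lemma core_sigma x l : orbit a x l ->
  (forall bp, In bp BL -> exists j, j < l /\ snd bp (Nat.iter j a x) = x0) ->
  sigma x0 A Sg a x (permW (secW (pw w l) x)).
Proof. intros Ho Hall.
  destruct (combine x l BL Ho) as (P&HP1&HP2&HP3).
  { intros bp Hbp. destruct (blet_good w Hw bp Hbp). auto. }
  set (F1 := flat_map (fun j => map (fun bp => fB (fst bp) (snd bp (Nat.iter j a x))) BL) (seq 0 l)).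
  assert (E : permW (secW (pw w l) x) = prod_list F1).
  { extensionality t. rewrite h_eq, permW_flat_map. unfold F1. rewrite prod_list_flat_map.
    f_equal. apply map_ext. intros j. extensionality y. rewrite permW_flat_map. f_equal.
    apply map_ext. intros bp. apply permW_secB. }
  assert (HPe : Permutation F1 (flat_map (Lbb x l) BL)).
  { unfold F1, Lbb. apply (perm_exchange (fun bp j => fB (fst bp) (snd bp (Nat.iter j a x)))). }
  assert (R : rel (HG x) (prod_list F1) P).
  { eapply rel_trans. apply perm_rel. apply HG_grp. exact HPe.
    eapply Permutation_Forall. apply Permutation_sym. exact HPe. auto. auto. }
  destruct R as (q&Hq&Eq). exists P, q. split; auto. split; auto.
  intros y. rewrite E. auto. Qed.

End Word.

Definition triv (t : nat) (u : X -> X) : Prop := forall m, t <= m -> forall z,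
  Nat.iter m (Sigma x0 A Sg) (fun f => f = u) z -> forall y, z y = y.

Lemma iter_Sigma_mono m (P Q : (X -> X) -> Prop) : (forall f, P f -> Q f) ->
  forall f, Nat.iter m (Sigma x0 A Sg) P f -> Nat.iter m (Sigma x0 A Sg) Q f.
Proof. revert P Q; induction m; intros P Q H f; simpl; auto.
  intros (a0&x&Ha&Hs). exists a0, x. split; auto. eapply IHm; eauto. Qed.

Lemma triv_step t u u' x : triv (S t) u -> sigma x0 A Sg u x u' -> triv t u'.
Proof. intros Ht Hs m Hm z Hz. apply (Ht (S m)). lia.
  rewrite Nat.iter_succ_r. eapply iter_Sigma_mono; [|exact Hz].
  intros f ->. exists u, x. auto. Qed.

Lemma triv_ev u : A u -> exists t, triv t u.
Proof. intros Hu. destruct (Het u Hu) as [n Hn]. exists (S n). intros m Hm. apply Hn. lia. Qed.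

Lemma min_ex (P : nat -> Prop) n : 0 < n -> P n -> exists l, 0 < l /\ P l /\ forall j, 0 < j < l -> ~ P j.
Proof. induction n as [n IH] using (well_founded_induction lt_wf). intros Hn Pn.
  destruct (classic (exists j, 0 < j < n /\ P j)) as [(j&Hj&Pj)|Hno].
  - apply (IH j); auto; lia.
  - exists n. split; auto. split; auto. intros j Hj Pj. apply Hno. eauto. Qed.

Lemma iter_mul_pt (f : X -> X) N x : Nat.iter N f x = x -> forall c, Nat.iter (c * N) f x = x.
Proof. intros H c. induction c; simpl; auto. rewrite Nat.iter_add, IHc, H. auto. Qed.

Lemma orbit_exists (a : X -> X) x M : 0 < M -> Nat.iter M a x = x ->
  exists l, orbit a x l /\ exists q, M = l * q.
Proof. intros HM HMx. destruct (min_ex (fun l => Nat.iter l a x = x) M HM HMx) as (l&Hl&Hlx&Hmin).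
  exists l. split. split; auto. exists (M / l).
  pose proof (Nat.div_mod M l ltac:(lia)) as Hdm.
  pose proof (Nat.mod_upper_bound M l ltac:(lia)) as Hub.
  assert (Hr : Nat.iter (M mod l) a x = x).
  { transitivity (Nat.iter (M mod l) a (Nat.iter (M / l * l) a x)). rewrite iter_mul_pt; auto.
    rewrite <- Nat.iter_add. replace (M mod l + M / l * l) with M by lia. auto. }
  destruct (M mod l) eqn:Er. lia. exfalso. apply (Hmin (S n)). lia. auto. Qed.

Lemma orbit_uniq (a : X -> X) x l1 l2 : orbit a x l1 -> orbit a x l2 -> l1 = l2.
Proof. intros (H1&H2&H3) (G1&G2&G3). destruct (Nat.lt_trichotomy l1 l2) as [L|[L|L]]; auto.
  - exfalso. apply (G3 l1); auto.
  - exfalso. apply (H3 l2); auto. Qed.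

Lemma allLA h : Forall (fun l => exists u, l = LA u /\ T u) h ->
  (forall v, evalW h v = rooted (permW h) v) /\ T (permW h).
Proof. induction h as [|l h IH]; intros HF.
  - split. intros [|]; auto. exact HT_id.
  - inversion HF as [|? ? (u&->&Hu) HF']; subst. destruct (IH HF') as [E1 E2]. split.
    + intros [|y v]; simpl; rewrite E1; auto.
    + simpl. apply HT_mul; auto. Qed.

Lemma allLB h : Forall (fun l => exists b, l = LB b /\ B b) h -> B (fun t => evalW h t).
Proof. induction h as [|l h IH]; intros HF.
  - apply B_id.
  - inversion HF as [|? ? (b&->&Hb) HF']; subst. simpl. apply (B_mul b (fun t => evalW h t)); auto. Qed.

Lemma cover (a : X -> X) M L : 0 < M -> (forall t, Nat.iter M a t = t) ->
  (forall bp, In bp L -> B (fst bp) /\ A (snd bp)) ->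
  exists R, forall x, ~ In x R -> forall bp, In bp L -> forall j,
     snd bp (Nat.iter j a x) <> x0 /\ T (secA (fst bp) (snd bp (Nat.iter j a x))).
Proof. intros HM HMa. induction L as [|[b p] L IH]; intros HL.
  - exists []. intros x _ bp [].
  - destruct IH as [R1 HR1]. intros; apply HL; right; auto.
    destruct (HL (b, p) (or_introl eq_refl)) as [Hb Hp]. simpl in Hb, Hp.
    destruct (HT_B b Hb) as [Lb HLb]. destruct (A_inv p Hp) as (pi&_&Pi1&Pi2).
    exists (flat_map (fun y => map (fun i => Nat.iter i a (pi y)) (seq 0 (S M))) Lb ++ R1).
    intros x Hx bp [<-|Hbp] j.
    + simpl. apply HLb. intros Hin. apply Hx. apply in_or_app. left.
      apply in_flat_map. exists (p (Nat.iter j a x)). split; auto.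
      apply in_map_iff. exists (M - j mod M). split.
      * rewrite Pi1. pose proof (Nat.div_mod j M ltac:(lia)) as Hdm.
        pose proof (Nat.mod_upper_bound j M ltac:(lia)) as Hub.
        replace (Nat.iter j a x) with (Nat.iter (j mod M) a (Nat.iter (j / M * M) a x))
          by (rewrite <- Nat.iter_add; f_equal; lia).
        rewrite (iter_mul_id a M HMa).
        rewrite <- Nat.iter_add. replace (M - j mod M + j mod M) with M by lia. auto.
      * apply in_seq. lia.
    + apply HR1; auto. intros Hin. apply Hx. apply in_or_app. right. auto. Qed.

Section Assemble.
Variable w : list letter.
Hypothesis Hw : good w.

Definition Qx x N := forall l, orbit (permW w) x l -> forall c v,
  Nat.iter (c * N) (evalW (secW (pw w l) x)) v = v.

Lemma Qx_mul x N m : Qx x N -> Qx x (m * N).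
Proof. intros H l Hl c v. rewrite Nat.mul_assoc. apply H; auto. Qed.

Lemma assemble : (forall x l, orbit (permW w) x l -> exists N, 0 < N /\
     forall v, Nat.iter N (evalW (secW (pw w l) x)) v = v) ->
  exists n, 0 < n /\ forall v, Nat.iter n (evalW w) v = v.
Proof. intros Hper. set (a := permW w).
  assert (Ha : A a) by (apply good_permW; auto).
  destruct (HAper a Ha) as (M&HM&HMa).
  assert (Horb : forall x, exists l, orbit a x l /\ exists q, M = l * q).
  { intros x. apply orbit_exists; auto. }
  destruct (cover a M (blet w) HM HMa) as [R HR].
  { intros bp Hbp. destruct (blet_good w Hw bp Hbp) as [[G1 _] G2]. auto. }
  destruct (list_lcm Qx R) as (NR&HNR&HQR).
  - intros y N m _ H. apply Qx_mul; auto.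
  - intros x _. destruct (Horb x) as (l&Hl&_). destruct (Hper x l Hl) as (N&HN&HNp).
    exists N. split; auto. intros l' Hl' c v. rewrite <- (orbit_uniq a x l l'); auto.
    apply iter_mul_id; auto.
  - assert (HQ : forall x, Qx x (Eexp * NR)).
    { intros x. destruct (classic (In x R)) as [Hin|Hnin].
      - apply Qx_mul; auto.
      - rewrite Nat.mul_comm. apply Qx_mul. intros l Hl c v.
        assert (HF : Forall (fun l => exists u, l = LA u /\ T u) (secW (pw w l) x)).
        { rewrite h_eq; auto. apply Forall_forall. intros le Hle.
          apply in_flat_map in Hle. destruct Hle as (j&_&Hle).
          apply in_flat_map in Hle. destruct Hle as (bp&Hbp&Hle).
          destruct (HR x Hnin bp Hbp j) as [N1 N2].
          unfold secB in Hle. destruct (eqX _ _); [contradiction|].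
          destruct Hle as [<-|[]]. eauto. }
        destruct (allLA _ HF) as [E1 E2].
        rewrite (iter_ext _ (rooted (permW (secW (pw w l) x)))); auto.
        rewrite iter_rooted. destruct v as [|y v]; simpl; auto.
        rewrite iter_mul_id; auto. }
    exists (M * (Eexp * NR)). split. nia.
    intros [|x v].
    + assert (E0 : evalW w [] = []) by (apply evalW_nil; auto).
      generalize (M * (Eexp * NR)). intros n. induction n; simpl; auto. rewrite IHn. auto.
    + rewrite <- evalW_pw, evalW_cons by (apply good_pw; auto).
      assert (Hx : Nat.iter (M * (Eexp * NR)) a x = x) by (rewrite Nat.mul_comm; apply iter_mul_id; auto).
      rewrite permW_pw. fold a. rewrite Hx.
      destruct (Horb x) as (l&Hl&q&Eq). f_equal.
      rewrite Eq, <- Nat.mul_assoc, (secW_pw_mul w l (q * (Eexp * NR)) x (proj1 (proj2 Hl))).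
      rewrite evalW_pw. apply HQ. auto. Qed.

End Assemble.

Lemma main_ind k : forall t w, good w -> cntW w <= k -> triv t (permW w) ->
  exists n, 0 < n /\ forall v, Nat.iter n (evalW w) v = v.
Proof. induction k as [k IHk] using (well_founded_induction lt_wf).
  intros t. induction t as [|t IHt]; intros w Hw Hk Ht; apply assemble; auto; intros x l Hl;
  set (h := secW (pw w l) x);
  assert (Hh : good h) by (apply good_secW, good_pw; auto);
  pose proof (cnt_h_le w Hw x l Hl) as Hcle; fold h in Hcle;
  (destruct (Nat.lt_ge_cases (cntW h) (cntW w)) as [Hlt|Hge];
  [ destruct (triv_ev (permW h)) as [t' Ht']; [apply good_permW; auto|];
    apply (IHk (cntW h) ltac:(lia) t' h); auto | ]);
  assert (Heq : cntW h = cntW w) by lia;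
  pose proof (cnt_h_eq w Hw x l Hl Heq) as Hall.
  -
    assert (Hl1 : l = 1).
    { destruct Hl as (L1&L2&L3). destruct (Nat.eq_dec l 1); auto. exfalso.
      apply (L3 1). lia. simpl. apply (Ht 0 (le_n 0) (permW w) eq_refl). }
    assert (HB : B (fun t => evalW h t)).
    { apply allLB. unfold h. rewrite h_eq; auto. apply Forall_forall. intros le Hle.
      apply in_flat_map in Hle. destruct Hle as (j&Hj&Hle). apply in_seq in Hj.
      apply in_flat_map in Hle. destruct Hle as (bp&Hbp&Hle).
      destruct (Hall bp Hbp) as (j'&Hj'&Ej').
      assert (j = 0) by lia. assert (j' = 0) by lia. subst.
      unfold secB in Hle. simpl in Ej', Hle. destruct (eqX _ _); [|contradiction].
      destruct Hle as [<-|[]]. exists (fst bp). split; auto.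
      apply (blet_good w Hw bp Hbp). }
    destruct (B_per _ HB) as (n&Hn&Hnp). exists n. split; auto.
  - apply (IHt h); auto. lia.
    eapply triv_step. exact Ht. apply core_sigma; auto. Qed.

End Main. End CSs.

Theorem theoremB (X : Type) (x0 : X) (A : (X -> X) -> Prop)
  (B : (list X -> list X) -> Prop) (S : (list X -> list X) -> Prop) :
  is_CS x0 A B ->
  periodic A ->
  (finite_exponent A \/ finite_support B) ->
  generates S B ->
  eventually_trivial x0 A S ->
  periodic (CS_group A B).
Proof.
  intros HCS HAper Hfin HS Het g Hg.
  destruct (words_CS X x0 A B S HCS HS g Hg) as (w&wi&Hw&_&Ew&_&_).
  assert (Hmain : forall Eexp (HE : 0 < Eexp) (T : (X -> X) -> Prop),
    T (fun t => t) -> (forall g h, T g -> T h -> T (fun t => h (g t))) ->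
    (forall u, T u -> forall t, Nat.iter Eexp u t = t) ->
    (forall b, B b -> exists L, forall y, ~ In y L -> y <> x0 /\ T (secA b y)) ->
    exists n, 0 < n /\ forall t, Nat.iter n g t = t).
  { intros Eexp HE T H1 H2 H3 H4.
    destruct (triv_ev X x0 A S Het Eexp HE (permW X w)) as [t Ht].
    { apply (good_permW X x0 A B S HCS); auto. }
    destruct (main_ind X x0 A B S HCS HS HAper Het Eexp HE T H1 H2 H3 H4 (cntW X w) t w Hw (le_n _) Ht)
      as (n&Hn&Hnp).
    exists n. split; auto. intros t0. rewrite <- (iter_ext _ _ _ _ Ew). auto. }
  destruct Hfin as [(e&He&HeA)|Hsup].
  - apply (Hmain e He A).
    + apply (A_id X x0 A B HCS).
    + apply (A_mul X x0 A B HCS).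
    + auto.
    + intros b Hb. exists [x0]. intros y Hy. assert (y <> x0) by (intros ->; apply Hy; left; auto).
      split; auto. apply (B_secA X x0 A B HCS); auto.
  - apply (Hmain 1 ltac:(lia) (fun u => forall t, u t = t)).
    + auto.
    + intros g1 h1 G1 H1 t. rewrite G1, H1. auto.
    + simpl. auto.
    + intros b Hb. destruct (Hsup b Hb) as [F HF]. exists (x0 :: F). intros y Hy.
      assert (y <> x0) by (intros ->; apply Hy; left; auto). split; auto.
      intros t. unfold secA. rewrite (B_head X x0 A B HCS); auto.
      rewrite HF. auto. intros Hin. apply Hy. right. auto. Qed.
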